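(* Let $n\ge 2$. The principal minor lattice $L'_n$ is minimally generated by \[\mathcal B'=\{2[in|jn] : i\neq j\in[n-1]\}\cup\{[in|in] : i\in[n-1]\}.\] Furthermore the group $L_n/L'_n$ is isomorphic to $(\mathbb{Z}/2\mathbb{Z})^{c_{n-1}}$, where $c_{n-1}=\binom{n-1}{2}$.
   Context: $[n]=\{1,\dots,n\}$. $\mathbb{Z}^{\binom{n+1}{2}}$ has standard basis $e_{ij}$, $1\le i\le j\le n$, with $e_{ij}=e_{ji}$. For $i,j,k,l\in[n]$, $[ij|kl]:=e_{ik}+e_{jl}-e_{il}-e_{jk}$ (so $[in|jn]=[jn|in]$). $V_n$ is the $n\times\binom{n+1}{2}$ integer matrix whose column indexed by $jk$ is $e_j+e_k\in\mathbb{Z}^n$, and $L_n=\ker_{\mathbb{Z}}(V_n)$. The principal minor lattice $L'_n$ is the sublattice of $\mathbb{Z}^{\binom{n+1}{2}}$ generated by the vectors $[ij|ij]$, $i,j\in[n]$ (exponent vectors of the principal $2$-minors $x_{ii}x_{jj}-x_{ij}^2$). *)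

(* Defs.v *)
From HB Require Import structures.
From mathcomp Require Import all_boot all_order all_algebra.
Set Implicit Arguments. Unset Strict Implicit. Unset Printing Implicit Defensive.
Import Order.TTheory GRing.Theory Num.Theory.
Local Open Scope ring_scope.

(* Index set {(i,j) : 1 <= i <= j <= n}, 0-based: ordinals i <= j in 'I_n. *)
Definition idx (n : nat) := {p : 'I_n * 'I_n | (p.1 <= p.2)%N}.

Definition vec (n : nat) := {ffun idx n -> int}.

Definition evec (n : nat) (i k : 'I_n) : vec n :=
  [ffun p : idx n => ((val p == (i, k)) || (val p == (k, i)) : nat)%:Z].

Definition brk (n : nat) (i j k l : 'I_n) : vec n :=
  evec i k + evec j l - evec i l - evec j k.

(* V_n x : the product of the n x binom(n+1,2) matrix V_n (column jk = e_j + e_k)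
   with x, as a vector 'I_n -> int. *)
Definition Vn (n : nat) (x : vec n) (i : 'I_n) : int :=
  \sum_(p : idx n) x p * ((((val p).1 == i) : nat) + (((val p).2 == i) : nat))%:Z.

Definition Ln (n : nat) (x : vec n) : Prop := forall i : 'I_n, Vn x i = 0.

Definition zspan (V : zmodType) (S : V -> Prop) (v : V) : Prop :=
  exists s : seq (int * V),
    (forall k : 'I_(size s), S (nth (0, 0) s k).2) /\
    v = \sum_(k < size s) (nth (0, 0) s k).2 *~ (nth (0, 0) s k).1.

Definition Lpn (n : nat) : vec n -> Prop :=
  zspan (fun v => exists i j : 'I_n, v = brk i j i j).

Definition min_generates (V : zmodType) (S L : V -> Prop) : Prop :=
  (forall v, zspan S v <-> L v) /\
  (forall T : V -> Prop, (forall v, T v -> S v) ->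
     (forall v, zspan T v <-> L v) -> forall v, S v -> T v).

Lemma pred_lt (n : nat) : (1 < n)%N -> (n.-1 < n)%N.
Proof. by case: n. Qed.

(* the index "n" of [n] (0-based: n.-1) *)
Definition lastI (n : nat) (h : (1 < n)%N) : 'I_n := Ordinal (pred_lt h).

Definition Bprime (n : nat) (h : (1 < n)%N) (v : vec n) : Prop :=
  (exists i j : 'I_n, [/\ i != j, (i < n.-1)%N, (j < n.-1)%N &
       v = (brk i (lastI h) j (lastI h)) *+ 2]) \/
  (exists i : 'I_n, (i < n.-1)%N /\ v = brk i (lastI h) i (lastI h)).

(* A/B ≅ G for subgroups B <= A of a Z-module V, via the first isomorphism
   theorem: a group hom A -> G, surjective, with kernel exactly B. *)
Definition quot_iso (V G : zmodType) (A B : V -> Prop) : Prop :=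
  (forall v, B v -> A v) /\
  exists f : V -> G,
    [/\ forall u v, A u -> A v -> f (u + v) = f u + f v,
        forall w, exists v, A v /\ f v = w
      & forall v, A v -> (f v = 0 <-> B v)].

(* Main.v *)
Require Import Defs.
From HB Require Import structures.
From mathcomp Require Import all_boot all_order all_algebra.
From mathcomp Require Import zify ring lra.
Set Implicit Arguments. Unset Strict Implicit. Unset Printing Implicit Defensive.
Import Order.TTheory GRing.Theory Num.Theory.
Local Open Scope ring_scope.

Section Zspan.
Variable V : zmodType.
Implicit Types S T : V -> Prop.

Lemma zspan_ind S (P : V -> Prop) :
  P 0 -> (forall w z u, S w -> P u -> P (w *~ z + u)) ->
  forall v, zspan S v -> P v.
Proof.
move=> P0 PS v [s [hS ->]]; elim: s hS => [|x s IH] hS; first by rewrite big_ord0.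
rewrite big_ord_recl /=; apply: PS; first exact: (hS ord0).
by apply: IH => k; exact: (hS (lift ord0 k)).
Qed.

Lemma zspan0 S : zspan S 0.
Proof. by exists [::]; split => [[]|]; rewrite ?big_ord0. Qed.

Lemma zspan_cons S w z u : S w -> zspan S u -> zspan S (w *~ z + u).
Proof.
move=> Sw [s [hS ->]]; exists ((z, w) :: s); split.
  by case=> [[|k] hk] //=; exact: (hS (Ordinal (hk : (k < size s)%N))).
by rewrite big_ord_recl.
Qed.

Lemma zspan_gen S w : S w -> zspan S w.
Proof. by move=> Sw; rewrite -[w]addr0 -[w]mulr1z; apply: zspan_cons => //; exact: zspan0. Qed.

Lemma zspanD S u v : zspan S u -> zspan S v -> zspan S (u + v).
Proof.
move=> hu hv; move: u hu; apply: zspan_ind; first by rewrite add0r.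
by move=> w z u Sw h; rewrite -addrA; apply: zspan_cons.
Qed.

Lemma zspanZ S u c : zspan S u -> zspan S (u *~ c).
Proof.
move: u; apply: zspan_ind; first by rewrite mul0rz; exact: zspan0.
by move=> w z u Sw h; rewrite mulrzDl -mulrzA; apply: zspan_cons.
Qed.

Lemma zspanN S u : zspan S u -> zspan S (- u).
Proof. by move=> h; rewrite -mulrN1z; apply: zspanZ. Qed.

Lemma zspanB S u v : zspan S u -> zspan S v -> zspan S (u - v).
Proof. by move=> hu hv; apply: zspanD => //; apply: zspanN. Qed.

Lemma zspanMn S u m : zspan S u -> zspan S (u *+ m).
Proof. by move=> h; rewrite -mulrz_nat; apply: zspanZ. Qed.

Lemma zspan_sum S (I : finType) (P : pred I) (F : I -> V) :
  (forall i, P i -> zspan S (F i)) -> zspan S (\sum_(i | P i) F i).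
Proof. by move=> h; apply: big_ind => //; [exact: zspan0|exact: zspanD]. Qed.

Lemma zspan_mono S T v : (forall w, S w -> zspan T w) -> zspan S v -> zspan T v.
Proof.
move=> h; move: v; apply: zspan_ind; first exact: zspan0.
by move=> w z u Sw hu; apply: zspanD => //; apply: zspanZ; apply: h.
Qed.
End Zspan.
Section Idx.
Variable n : nat.
Implicit Types a b c d : 'I_n.

Lemma mkidx_proof a b :
  ((if (a <= b)%N then (a, b) else (b, a)).1 <= (if (a <= b)%N then (a, b) else (b, a)).2)%N.
Proof. case: (leqP a b) => h /=; [exact: h | exact: ltnW]. Qed.

Definition mkidx a b : idx n :=
  exist (fun p : 'I_n * 'I_n => (p.1 <= p.2)%N) _ (mkidx_proof a b).

Lemma mkidxC a b : mkidx a b = mkidx b a.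
Proof.
apply: val_inj => /=; case: (ltngtP a b) => h //.
by congr pair; apply: val_inj.
Qed.

Lemma mkidxE (q : idx n) : q = mkidx (val q).1 (val q).2.
Proof. by apply: val_inj => /=; case: q => [[x y] /= ->]. Qed.

Lemma eq_mkidx a b c d :
  (mkidx a b == mkidx c d) = ((a == c) && (b == d)) || ((a == d) && (b == c)).
Proof.
rewrite -val_eqE /=.
case: (ltngtP a b) => h1; case: (ltngtP c d) => h2; rewrite /= !xpair_eqE -!val_eqE /=.
all: case: (eqVneq (a:nat) c) => e1; case: (eqVneq (a:nat) d) => e2;
  case: (eqVneq (b:nat) c) => e3; case: (eqVneq (b:nat) d) => e4 => //=; lia.
Qed.

Lemma evecE a b (q : idx n) : evec a b q = (q == mkidx a b : nat)%:Z.
Proof.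
rewrite ffunE [in RHS](mkidxE q) eq_mkidx; case: q => [[x y] hxy] /=.
by rewrite !xpair_eqE.
Qed.

Lemma evecC a b : evec a b = evec b a.
Proof. by apply/ffunP => q; rewrite !evecE mkidxC. Qed.
End Idx.
Section Vn.
Variable n : nat.
Implicit Types x y : vec n.

Lemma VnD x y i : Vn (x + y) i = Vn x i + Vn y i.
Proof. by rewrite /Vn -big_split; apply: eq_bigr => p _; rewrite ffunE mulrDl. Qed.

Lemma VnZ x z i : Vn (x *~ z) i = Vn x i * z.
Proof.
rewrite /Vn mulr_suml; apply: eq_bigr => p _.
by rewrite ffunMzE -mulrzr intz mulrAC.
Qed.

Lemma VnN x i : Vn (- x) i = - Vn x i.
Proof. by rewrite -mulrN1z VnZ mulrN1. Qed.

Lemma VnB x y i : Vn (x - y) i = Vn x i - Vn y i.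
Proof. by rewrite VnD VnN. Qed.

Lemma Vn0 i : Vn (0 : vec n) i = 0.
Proof. by rewrite /Vn big1 // => p _; rewrite ffunE mul0r. Qed.

Lemma Vn_evec (a b i : 'I_n) : Vn (evec a b) i = (a == i : nat)%:Z + (b == i : nat)%:Z.
Proof.
rewrite /Vn (bigD1 (mkidx a b)) //= big1 => [|p hp]; last by rewrite evecE (negbTE hp) mul0r.
rewrite evecE eqxx mul1r addr0 /=; case: leqP => _ //=; by rewrite addrC.
Qed.

Lemma Ln_brk (i j k l : 'I_n) : Ln (brk i j k l).
Proof. move=> m; rewrite /brk !VnB VnD !Vn_evec; ring. Qed.

Lemma Ln0 : Ln (0 : vec n).
Proof. by move=> i; rewrite Vn0. Qed.

Lemma LnD x y : Ln x -> Ln y -> Ln (x + y).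
Proof. by move=> hx hy i; rewrite VnD hx hy addr0. Qed.

Lemma LnZ x z : Ln x -> Ln (x *~ z).
Proof. by move=> hx i; rewrite VnZ hx mul0r. Qed.

Lemma Lpn_Ln x : Lpn x -> Ln x.
Proof.
move: x; apply: zspan_ind; first exact: Ln0.
by move=> w z u [i [j ->]] hu; apply: LnD => //; apply: LnZ; apply: Ln_brk.
Qed.
End Vn.
Lemma ord_eqE m (x y : 'I_m) : (x == y) = (nat_of_ord x == nat_of_ord y).
Proof. by []. Qed.

Ltac splitnat := repeat match goal with
  | |- context [@eq_op ?T ?x ?y] => case: (@eqVneq T x y) => ?
  end.

Lemma fDE (I : finType) (M : zmodType) (f g : {ffun I -> M}) x : (f + g) x = f x + g x.
Proof. by rewrite ffunE. Qed.
Lemma fNE (I : finType) (M : zmodType) (f : {ffun I -> M}) x : (- f) x = - f x.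
Proof. by rewrite ffunE. Qed.
Lemma f0E (I : finType) (M : zmodType) x : (0 : {ffun I -> M}) x = 0.
Proof. by rewrite ffunE. Qed.

Section Coord.
Variable n : nat.
Implicit Types a b c d s t : 'I_n.

Lemma brk_coord a b c d s t :
  brk a b c d (mkidx s t) =
  (mkidx s t == mkidx a c : nat)%:Z + (mkidx s t == mkidx b d : nat)%:Z
  - (mkidx s t == mkidx a d : nat)%:Z - (mkidx s t == mkidx b c : nat)%:Z.
Proof. by rewrite /brk !fDE !fNE !evecE. Qed.

Lemma brk2_coord a b c d s t :
  (brk a b c d *+ 2) (mkidx s t) = 2 * brk a b c d (mkidx s t).
Proof. by rewrite ffunMnE mulr_natl. Qed.
End Coord.

From Stdlib Require Import Classical_Prop.

Section Main.
Variable n : nat.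
Variable hn : (1 < n)%N.
Let L := Defs.lastI hn.
Lemma valL : nat_of_ord L = n.-1. Proof. by []. Qed.

Ltac ctac := rewrite ?brk_coord !eq_mkidx !ord_eqE ?valL; splitnat => //=; lia.

Lemma cA1 (i k l : 'I_n) : (i < n.-1)%N -> (k : nat) != l ->
  brk k L l L (mkidx i i) = 0.
Proof. move=> hi hkl; ctac. Qed.

Lemma cA2 (i k : 'I_n) : (i < n.-1)%N -> (k < n.-1)%N ->
  brk k L k L (mkidx i i) = ((k : nat) == i : nat)%:Z.
Proof. move=> hi hk; ctac. Qed.

Lemma cB1 (i j k : 'I_n) : (i < n.-1)%N -> (j < n.-1)%N -> (i : nat) != j -> (k < n.-1)%N ->
  brk k L k L (mkidx i j) = 0.
Proof. move=> hi hj hij hk; ctac. Qed.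

Lemma cB2 (i j k l : 'I_n) : (i < n.-1)%N -> (j < n.-1)%N -> (i : nat) != j ->
  (k < n.-1)%N -> (l < n.-1)%N ->
  brk k L l L (mkidx i j) = (((k : nat) == i) && ((l : nat) == j) || ((k : nat) == j) && ((l : nat) == i) : nat)%:Z.
Proof. move=> hi hj hij hk hl; ctac. Qed.

Lemma ordL (x : 'I_n) : x = L \/ (x < n.-1)%N.
Proof.
case: (ltnP x n.-1) => h; [by right | left; apply: val_inj => /=].
have := ltn_ord x; lia.
Qed.

Lemma brk_swap (a b c : 'I_n) : brk a c b c = brk b c a c.
Proof.
rewrite /brk (evecC b a) (evecC c a) (evecC c b).
apply/ffunP => q; rewrite !(fDE, fNE); ring.
Qed.

Lemma brk_sym (a b : 'I_n) : brk a b a b = brk b a b a.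
Proof.
rewrite /brk (evecC b a).
apply/ffunP => q; rewrite !(fDE, fNE); ring.
Qed.

Lemma brk_id2 (i j : 'I_n) :
  brk i L j L *+ 2 = brk i L i L + brk j L j L - brk i j i j.
Proof.
rewrite /brk (evecC L i) (evecC L j) (evecC j i).
apply/ffunP => q; rewrite !(fDE, fNE, ffunMnE); ring.
Qed.

Lemma brk_id3 (i j : 'I_n) :
  brk i j i j = brk i L i L + brk j L j L - brk i L j L *+ 2.
Proof.
rewrite brk_id2; apply/ffunP => q; rewrite !(fDE, fNE); ring.
Qed.

Lemma brk_ii (i : 'I_n) : brk i i i i = 0.
Proof. apply/ffunP => q; rewrite /brk !(fDE, fNE, f0E); ring. Qed.

Lemma gen_eq v : zspan (Bprime hn) v <-> Lpn v.
Proof.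
rewrite /Lpn; split => h; apply: (zspan_mono _ h) => w.
- case=> [[i [j [hij hi hj ->]]] | [i [hi ->]]].
    rewrite brk_id2; apply: zspanB; first apply: zspanD.
    + exact: (zspan_gen (ex_intro _ i (ex_intro _ L erefl))).
    + exact: (zspan_gen (ex_intro _ j (ex_intro _ L erefl))).
    + exact: (zspan_gen (ex_intro _ i (ex_intro _ j erefl))).
  exact: (zspan_gen (ex_intro _ i (ex_intro _ L erefl))).
- case=> [i [j ->]].
  case: (eqVneq i j) => [<- | hij]; first by rewrite brk_ii; exact: zspan0.
  have Bd (k : 'I_n) : (k < n.-1)%N -> zspan (Bprime hn) (brk k L k L).
    by move=> hk; apply: zspan_gen; right; exists k.
  case: (ordL i) => [ei | hi]; case: (ordL j) => [ej | hj].
  + by move: hij; rewrite ei ej eqxx.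
  + by rewrite ei brk_sym; apply: Bd.
  + by rewrite ej; apply: Bd.
  + rewrite brk_id3; apply: zspanB; first by apply: zspanD; apply: Bd.
    by apply: zspan_gen; left; exists i, j.
Qed.

Lemma witness v : Bprime hn v ->
  exists q, v q != 0 /\ forall w, Bprime hn w -> w q != 0 -> w = v.
Proof.
case=> [[i [j [hij hi hj ->]]] | [i [hi ->]]].
- have hij' : (i : nat) != j by [].
  exists (mkidx i j); rewrite brk2_coord cB2 // !eqxx /=; split => //.
  move=> w; case=> [[k [l [hkl hk hl ->]]] | [k [hk ->]]].
  + rewrite brk2_coord cB2 //.
    case: (eqVneq (k : nat) i) => e1; case: (eqVneq (l : nat) j) => e2 //=.
    * by rewrite (val_inj e1) (val_inj e2).
    * case: (eqVneq (k : nat) j) => e3; case: (eqVneq (l : nat) i) => e4 //= _.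
      by rewrite (val_inj e3) (val_inj e4) brk_swap.
    * case: (eqVneq (k : nat) j) => e3; case: (eqVneq (l : nat) i) => e4 //= _.
      by rewrite (val_inj e3) (val_inj e4) brk_swap.
    * case: (eqVneq (k : nat) j) => e3; case: (eqVneq (l : nat) i) => e4 //= _.
      by rewrite (val_inj e3) (val_inj e4) brk_swap.
  + by rewrite cB1 // eqxx.
- exists (mkidx i i); rewrite cA2 // eqxx; split => //.
  move=> w; case=> [[k [l [hkl hk hl ->]]] | [k [hk ->]]].
  + by rewrite brk2_coord cA1 // mulr0 eqxx.
  + rewrite cA2 //; case: (eqVneq (k : nat) i) => e //= _.
    by rewrite (val_inj e).
Qed.

Lemma part1 : min_generates (Bprime hn) (@Lpn n).
Proof.
split; first exact: gen_eq.
move=> T TB Tgen v Bv; apply: NNPP => nTv.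
have : zspan T v by apply/Tgen; apply/gen_eq; apply: zspan_gen.
have [q [vq hq]] := witness Bv.
have : forall u, zspan T u -> u q = 0.
  apply: zspan_ind; first by rewrite f0E.
  move=> w z u Tw hu; rewrite fDE ffunMzE hu addr0.
  case: (eqVneq (w q) 0) => [-> | wq]; first by rewrite mul0rz.
  by case: nTv; rewrite -(hq w (TB _ Tw) wq).
by move=> h /h; move/eqP: vq.
Qed.
End Main.
Lemma Z2_nat (m : nat) : ((m%:R : 'Z_2) = 0) <-> (2 %| m)%N.
Proof.
rewrite Zp_nat; split => [/(congr1 val) /= h | h]; first by apply/eqP.
by apply: val_inj => /=; apply/eqP.
Qed.

Lemma Z2_int (z : int) : ((z%:~R : 'Z_2) = 0) <-> (2 %| z)%Z.
Proof.
rewrite dvdzE; case: z => m.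
  by rewrite /= -(Z2_nat m).
rewrite NegzE mulrNz; split => [/eqP | h].
  by rewrite oppr_eq0 => /eqP /Z2_nat.
by apply/eqP; rewrite oppr_eq0; apply/eqP/Z2_nat.
Qed.

Section Part2.
Variable n : nat.
Variable hn : (1 < n)%N.
Let L := Defs.lastI hn.
Let m := n.-1.
Let K := [set t : 2.-tuple 'I_m | sorted ltn (map val t)].
Let cardK : #|K| = 'C(m, 2) := card_ltn_sorted_tuples 2 m.

Definition tk (k : 'I_('C(n.-1, 2))) : 2.-tuple 'I_m := enum_val (cast_ord (esym cardK) k).
Definition wid (x : 'I_m) : 'I_n := widen_ord (leq_pred n) x.
Definition pa k := wid (tnth (tk k) ord0).
Definition pb k := wid (tnth (tk k) ord_max).

Lemma tkP k : tk k \in K.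
Proof. exact: enum_valP. Qed.

Lemma K_lt (t : 2.-tuple 'I_m) : t \in K -> (tnth t ord0 < tnth t ord_max)%N.
Proof.
rewrite inE; case/tupleP: t => x t; case/tupleP: t => y t.
by rewrite (tuple0 t) /= andbT.
Qed.

Lemma P1 k : [/\ (pa k < pb k)%N & (pb k < n.-1)%N].
Proof. by split; [exact: K_lt (tkP k) | exact: (ltn_ord (tnth (tk k) ord_max))]. Qed.

Lemma P2 k k' : (pa k : nat) = pa k' -> (pb k : nat) = pb k' -> k = k'.
Proof.
move=> ea eb.
have : tk k = tk k'.
  apply: eq_from_tnth => i; apply: val_inj.
  case: i => [[|[|i]] hi] //=.
    by have -> : Ordinal hi = ord0 by apply: val_inj.
  by have -> : Ordinal hi = ord_max by apply: val_inj.
by move/enum_val_inj/cast_ord_inj.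
Qed.

Lemma P3 (x y : 'I_n) : (x < y)%N -> (y < n.-1)%N -> exists k, pa k = x /\ pb k = y.
Proof.
move=> hxy hy.
have hx : (x < m)%N by rewrite /m; lia.
pose t := [tuple (Ordinal hx : 'I_m); (Ordinal hy : 'I_m)].
have tK : t \in K by rewrite inE /= hxy.
exists (cast_ord cardK (enum_rank_in tK t)); rewrite /pa /pb.
have -> : tk (cast_ord cardK (enum_rank_in tK t)) = t.
  by rewrite /tk cast_ordK enum_rankK_in.
by split; apply: val_inj.
Qed.
End Part2.
Lemma valLg n (h : (1 < n)%N) : nat_of_ord (Defs.lastI h) = n.-1.
Proof. by []. Qed.

Ltac ctac2 := rewrite ?brk_coord !eq_mkidx !ord_eqE ?valLg; splitnat => //=; lia.

Section Part2b.
Variable n : nat.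
Variable hn : (1 < n)%N.
Let L := Defs.lastI hn.

Definition fmap (x : vec n) : 'rV['Z_2]_('C(n.-1, 2)) :=
  \row_k ((x (mkidx (pa k) (pb k)))%:~R : 'Z_2).

Lemma fmapD u v : fmap (u + v) = fmap u + fmap v.
Proof. by apply/rowP => k; rewrite !mxE fDE intrD. Qed.

Lemma fmap0 : fmap 0 = 0.
Proof. by apply/rowP => k; rewrite !mxE f0E. Qed.

Lemma fmapZ0 u z : fmap u = 0 -> fmap (u *~ z) = 0.
Proof.
move/rowP => h; apply/rowP => k; have := h k; rewrite !mxE ffunMzE mulrzz intrM => ->.
by rewrite mul0r.
Qed.

Lemma cP0 (a b k l : 'I_n) : (a < b)%N -> (b < n.-1)%N -> (k < l)%N -> (l < n.-1)%N ->
  brk k L l L (mkidx a b) = (((a : nat) == k) && ((b : nat) == l) : nat)%:Z.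
Proof. move=> *; ctac2. Qed.

Lemma cD (i j a b : 'I_n) : (a : nat) != b ->
  brk i j i j (mkidx a b) = - 2 * (mkidx a b == mkidx i j : nat)%:Z.
Proof. move=> *; ctac2. Qed.

Lemma fmap_gen i j : fmap (brk i j i j) = 0.
Proof.
apply/rowP => k; rewrite !mxE; have [h1 h2] := P1 k.
rewrite cD; last by rewrite neq_ltn h1.
have h2z : ((- 2 : int)%:~R : 'Z_2) = 0 by apply/Z2_int.
by rewrite intrM h2z mul0r.
Qed.

Lemma Lpn_fmap v : Lpn v -> fmap v = 0.
Proof.
move: v; apply: zspan_ind; first exact: fmap0.
move=> w z u [i [j ->]] hu; rewrite fmapD hu addr0; apply: fmapZ0; exact: fmap_gen.
Qed.

Lemma fmap_surj w : exists v, Ln v /\ fmap v = w.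
Proof.
exists (\sum_(k < 'C(n.-1, 2)) brk (pa k) L (pb k) L *~ (w 0 k : nat)%:Z); split.
  apply: (big_ind (@Ln n)); [exact: Ln0 | exact: LnD | move=> k _; apply: LnZ; exact: Ln_brk].
apply/rowP => k'; rewrite mxE sum_ffunE (bigD1 k') //= big1 => [|k hk].
  have [h1 h2] := P1 k'.
  rewrite ffunMzE cP0 // !eqxx addr0 /=.
  by rewrite intz -pmulrn natr_Zp.
have [h1 h2] := P1 k'; have [h3 h4] := P1 k.
rewrite ffunMzE cP0 //.
case: (eqVneq (pa k' : nat) (pa k)) => e1; case: (eqVneq (pb k' : nat) (pb k)) => e2 /=; try by rewrite mul0rz.
by move: hk; rewrite (P2 e1 e2) eqxx.
Qed.
End Part2b.
Section Kernel.
Variable n : nat.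
Variable hn : (1 < n)%N.
Let L := Defs.lastI hn.

Lemma ordL2 (x : 'I_n) : x = L \/ (x < n.-1)%N.
Proof.
case: (ltnP x n.-1) => h; [by right | left; apply: val_inj => /=].
have := ltn_ord x; lia.
Qed.

Variable v : vec n.
Hypothesis hv : Ln v.
Hypothesis hf : fmap v = 0.

Lemma ev1 (a b : 'I_n) : (a < b)%N -> (b < n.-1)%N -> (2 %| v (mkidx a b))%Z.
Proof.
move=> hab hb; have [k [ea eb]] := P3 hn hab hb.
by move/rowP: hf => /(_ k); rewrite !mxE ea eb => /Z2_int.
Qed.

Lemma ev2 (a : 'I_n) : (a < n.-1)%N -> (2 %| v (mkidx a L))%Z.
Proof.
move=> ha; have := hv a; rewrite /Vn (bigD1 (mkidx a L)) //=.
rewrite (_ : (a <= n.-1)%N = true); last by apply: ltnW.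
rewrite /= eqxx (_ : (L == a) = false); last first.
  by apply/eqP => /(congr1 val) /=; lia.
rewrite mulr1 => /eqP; rewrite addr_eq0 => /eqP ->; rewrite rpredN.
apply: rpred_sum => p hp.
rewrite (mkidxE p) in hp *.
case: p hp => [[x y] hxy] /=; rewrite /= in hxy.
rewrite eq_mkidx => hp; rewrite hxy /=.
case: (eqVneq x a) => e1; case: (eqVneq y a) => e2 /=.
- by apply: dvdz_mull; apply: dvdzz.
- rewrite mulr1.
  case: (ordL2 y) => ey.
    by move: hp; rewrite e1 ey !eqxx.
  apply: ev1 => //; move/eqP: e2 => e2; rewrite ltn_neqAle hxy andbT.
  by apply/eqP => /val_inj h; apply: e2; rewrite -h.
- rewrite mulr1; apply: ev1 => //.
    move/eqP: e1 => e1; rewrite ltn_neqAle hxy andbT.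
    by apply/eqP => /val_inj h; apply: e1; rewrite h.
  by rewrite e2.
- by rewrite mulr0 dvdz0.
Qed.

Lemma ev3 (q : idx n) : (val q).1 != (val q).2 -> (2 %| v q)%Z.
Proof.
move=> hne; rewrite (mkidxE q); case: q hne => [[x y] hxy] /= hne.
have hlt : (x < y)%N by rewrite ltn_neqAle hne hxy.
case: (ordL2 y) => [ey | hy]; last by apply: ev1.
rewrite ey; apply: ev2; move: hlt; rewrite ey valLg; lia.
Qed.

Definition Ssum := \sum_(p : idx n | (val p).1 != (val p).2)
   brk (val p).1 (val p).2 (val p).1 (val p).2 *~ (v p %/ 2)%Z.

Lemma LpnS : Lpn Ssum.
Proof.
rewrite /Lpn; apply: zspan_sum => p _; apply: zspanZ; apply: zspan_gen.
by exists (val p).1, (val p).2.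
Qed.

Lemma y_off (a b : 'I_n) : (a : nat) != b -> (v + Ssum) (mkidx a b) = 0.
Proof.
move=> hab; rewrite fDE sum_ffunE (bigD1 (mkidx a b)) /=; last first.
  by case: leqP => _ //=; rewrite eq_sym.
rewrite big1 => [|p hp]; last first.
  rewrite ffunMzE cD // -(mkidxE p) (_ : (mkidx a b == p) = false) ?mulr0 ?mul0rz //.
  by apply/negbTE; move: hp => /andP [_]; rewrite eq_sym.
rewrite ffunMzE cD // -(mkidxE (mkidx a b)) eqxx addr0 mulrzz.
have h2 : (2 %| v (mkidx a b))%Z.
  by apply: ev3; rewrite /=; case: leqP => _ //=; rewrite eq_sym.
have e := divzK h2; set d := (_ %/ _)%Z in e *; rewrite -e /=; lia.
Qed.

Lemma y_diag (a : 'I_n) : (v + Ssum) (mkidx a a) = 0.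
Proof.
have := LnD hv (Lpn_Ln LpnS) a; rewrite /Vn (bigD1 (mkidx a a)) //= big1 => [|p hp].
  rewrite leqnn /= eqxx addr0 => /eqP; rewrite mulf_eq0 => /orP [/eqP -> //|].
  by [].
move: hp; rewrite (mkidxE p); case: p => [[x y] hxy] /=; rewrite eq_mkidx => hp.
case: (eqVneq (x : nat) y) => hxy'.
  have exy : x = y := val_inj hxy'.
  move: hp hxy; rewrite -exy !andbb orbb leqnn /= => hxa _.
  by rewrite (negbTE hxa) mulr0.
by rewrite y_off // mul0r.
Qed.

Lemma kernel_to : Lpn v.
Proof.
have y0 : v + Ssum = 0.
  apply/ffunP => q; rewrite f0E (mkidxE q).
  case: (eqVneq ((val q).1 : nat) (val q).2) => h; last by apply: y_off.
  by rewrite (val_inj h); apply: y_diag.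
have -> : v = - Ssum by apply/eqP; rewrite -addr_eq0 y0.
exact: zspanN LpnS.
Qed.
End Kernel.

Theorem proposition2p3 (n : nat) (hn : (1 < n)%N) :
  min_generates (Bprime hn) (@Lpn n) /\
  quot_iso 'rV['Z_2]_('C(n.-1, 2)) (@Ln n) (@Lpn n).
Proof.
split; first exact: part1.
split; first exact: Lpn_Ln.
exists (@fmap n); split.
- by move=> u v _ _; apply: fmapD.
- by move=> w; have [v [h1 h2]] := fmap_surj hn w; exists v.
- move=> v hv; split; last exact: Lpn_fmap.
  by move=> h; exact: (kernel_to hn hv h).
Qed.
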